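(* Let $L$ be a Leibniz algebra over $F$ and $(l,r,V)$ a representation of $L$. Let $A$ be a subspace of $L$ and $x\in n_L(A)$. Then for every integer $k\ge 0$ and every $a\in A$: (i) $\delta_{k+1}:=r_a^{k+1}r_x-r_xr_a^{k+1}\in (r_A)^{k+1}$; (ii) $\beta_{k+1}:=r_x^{k+1}r_a-r_ar_x^{k+1}\in r_Ar_x^{k}+\cdots+r_Ar_x+r_A$.
   Context: $F$ is an algebraically closed field of characteristic zero; all spaces are finite-dimensional. A (right) Leibniz algebra is a vector space $L$ with bilinear bracket satisfying $[x,[y,z]]=[[x,y],z]-[[x,z],y]$. A representation $(l,r,V)$ of $L$ is a vector space $V$ with linear maps $l,r:L\to\mathrm{End}_F(V)$, $x\mapsto l_x,r_x$, such that $r_{[x,y]}=r_yr_x-r_xr_y$, $l_{[x,y]}=r_yl_x-l_xr_y$, $l_{[x,y]}=r_yl_x+l_xl_y$ (products are compositions). For a subspace $A\subseteq L$, $r_A=\{r_a:a\in A\}$ (a subspace of $\mathrm{End}_F(V)$); $(r_A)^p$ is the linear span of all compositions $r_{a_1}\cdots r_{a_p}$ with $a_i\in A$; $r_Ar_x^j=\{r_a r_x^j: a\in A\}$, with $r_x^0=\mathrm{id}_V$; $+$ denotes sum of subspaces. The normalizer of $A$ is $n_L(A)=\{y\in L: [y,a]\in A \text{ and } [a,y]\in A \text{ for all } a\in A\}$. *)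

(* Defs.v *)
From mathcomp Require Import all_boot all_order all_algebra.
Set Implicit Arguments. Unset Strict Implicit. Unset Printing Implicit Defensive.
Import GRing.Theory.
Local Open Scope ring_scope.

Definition lpow (F : fieldType) (V : vectType F) (f : 'End(V)) (n : nat) : 'End(V) :=
  iter n (fun g => (f \o g)%VF) \1%VF.

Definition rprod (F : fieldType) (L V : vectType F) (r : L -> 'End(V)) (s : seq L)
  : 'End(V) := foldr (fun b g => (r b \o g)%VF) \1%VF s.

(* f lies in (r_A)^p : the linear span of all r_{a_1} ... r_{a_p}, a_i in A. *)
Definition in_rA_pow (F : fieldType) (L V : vectType F) (r : L -> 'End(V))
  (A : {vspace L}) (p : nat) (f : 'End(V)) : Prop :=
  exists (n : nat) (c : 'I_n -> F) (a : 'I_n -> p.-tuple L),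
    (forall i, all (fun b => b \in A) (a i)) /\
    f = \sum_(i < n) c i *: rprod r (a i).

Definition in_rA_sum_rx (F : fieldType) (L V : vectType F) (r : L -> 'End(V))
  (A : {vspace L}) (x : L) (k : nat) (f : 'End(V)) : Prop :=
  exists a : 'I_k.+1 -> L, (forall j, a j \in A) /\
    f = \sum_(j < k.+1) (r (a j) \o lpow (r x) j)%VF.

Definition in_normalizer (F : fieldType) (L : vectType F) (br : L -> L -> L)
  (A : {vspace L}) (y : L) : Prop :=
  forall a, a \in A -> br y a \in A /\ br a y \in A.

(* Main.v *)
Require Import Defs.
From mathcomp Require Import all_boot all_order all_algebra.
Import GRing.Theory.
Local Open Scope ring_scope.
Set Implicit Arguments. Unset Strict Implicit.

Lemma zid (Z : zmodType) (C Q P : Z) : C - Q = (P - Q) + (C - P).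
Proof. by rewrite [RHS]addrC addrA subrK. Qed.

Section H.
Variables (F : fieldType) (L V : vectType F) (r : L -> 'End(V)).
Hypothesis rlin : linear r.

Lemma rD u v : r (u + v) = r u + r v.
Proof. by have := rlin 1 u v; rewrite !scale1r. Qed.

Lemma r0 : r 0 = 0.
Proof. have H := rD 0 0; rewrite addr0 in H; apply: (addrI (r 0)); by rewrite addr0 -H. Qed.

Lemma comp_sumr (f : 'End(V)) n (G : 'I_n -> 'End(V)) :
  (f \o \sum_(i < n) G i = \sum_(i < n) (f \o G i))%VF.
Proof.
elim/big_rec2: _ => [|i y1 y2 _ <-]; first by rewrite comp_lfun0r.
by rewrite comp_lfunDr.
Qed.

Lemma comp_suml (f : 'End(V)) n (G : 'I_n -> 'End(V)) :
  ((\sum_(i < n) G i) \o f = \sum_(i < n) (G i \o f))%VF.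
Proof.
elim/big_rec2: _ => [|i y1 y2 _ <-]; first by rewrite comp_lfun0l.
by rewrite comp_lfunDl.
Qed.

Lemma lpowSr (f : 'End(V)) n : (lpow f n \o f)%VF = lpow f n.+1.
Proof.
elim: n => [|n IH]; first by rewrite /lpow /= comp_lfun1l comp_lfun1r.
rewrite -[lpow f n.+2]/(f \o lpow f n.+1)%VF.
by rewrite {1}[lpow f n.+1]/(f \o lpow f n)%VF -comp_lfunA IH.
Qed.

Variable A : {vspace L}.

Lemma pow_add p f g : in_rA_pow r A p f -> in_rA_pow r A p g ->
  in_rA_pow r A p (f + g).
Proof.
move=> [n [c [a [Ha ->]]]] [m [d [b [Hb ->]]]].
exists (n + m), (fun i => match split i with inl j => c j | inr j => d j end),
  (fun i => match split i with inl j => a j | inr j => b j end).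
split; first by move=> i; case: (split i).
rewrite big_split_ord /=; congr (_ + _); apply: eq_bigr => i _.
  by rewrite (unsplitK (inl i : 'I_n + 'I_m)).
by rewrite (unsplitK (inr i : 'I_n + 'I_m)).
Qed.

Lemma pow_lmul p f b : b \in A -> in_rA_pow r A p f ->
  in_rA_pow r A p.+1 (r b \o f)%VF.
Proof.
move=> bA [n [c [a [Ha ->]]]].
exists n, c, (fun i => [tuple of b :: a i]); split.
  by move=> i /=; rewrite bA Ha.
rewrite comp_sumr; apply: eq_bigr => i _.
by rewrite -comp_lfunZr.
Qed.

Lemma pow_lpow a n : a \in A -> in_rA_pow r A n (lpow (r a) n).
Proof.
move=> aA; exists 1%N, (fun _ => 1), (fun _ => [tuple of nseq n a]); split.
  by move=> i; apply/allP => y /nseqP [-> _].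
rewrite big_ord1 scale1r /rprod /lpow /=.
by elim: n => //= n ->.
Qed.

Definition S x n (f : 'End(V)) := exists c : nat -> L, (forall j, c j \in A) /\
  f = \sum_(j < n) (r (c j) \o lpow (r x) j)%VF.

Lemma S_add x n f g : S x n f -> S x n g -> S x n (f + g).
Proof.
move=> [c [Hc ->]] [d [Hd ->]]; exists (fun j => c j + d j); split.
  by move=> j; rewrite rpredD.
by rewrite -big_split /=; apply: eq_bigr => i _; rewrite rD comp_lfunDl.
Qed.

Lemma S_mono x n f : S x n f -> S x n.+1 f.
Proof.
move=> [c [Hc ->]]; exists (fun j => if (j < n)%N then c j else 0); split.
  by move=> j; case: ifP => // _; rewrite mem0v.
rewrite big_ord_recr /= ltnn r0 comp_lfun0l addr0.
by apply: eq_bigr => i _; rewrite ltn_ord.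
Qed.

Lemma S_rx x n f : S x n f -> S x n.+1 (f \o r x)%VF.
Proof.
move=> [c [Hc ->]]; exists (fun j => if j is j'.+1 then c j' else 0); split.
  by case=> [|j] //; rewrite mem0v.
rewrite big_ord_recl /= r0 comp_lfun0l add0r comp_suml.
by apply: eq_bigr => i _; rewrite -comp_lfunA lpowSr.
Qed.

Lemma S_single x n b : b \in A -> S x n.+1 (r b \o lpow (r x) n)%VF.
Proof.
move=> bA; exists (fun j => if j == n then b else 0); split.
  by move=> j; case: ifP => // _; rewrite mem0v.
rewrite big_ord_recr /= eqxx big1 ?add0r // => i _.
by rewrite (ltn_eqF (ltn_ord i)) r0 comp_lfun0l.
Qed.

End H.

Theorem lemma2p11 (F : closedFieldType) (L V : vectType F)
  (br : L -> L -> L) (l r : L -> 'End(V)) (A : {vspace L}) (x : L) :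
  [pchar F] =i pred0 ->
  (forall y, linear (br y)) -> (forall z, linear (br^~ z)) ->
  (forall y z w, br y (br z w) = br (br y z) w - br (br y w) z) ->
  linear r -> linear l ->
  (forall y z, r (br y z) = (r z \o r y)%VF - (r y \o r z)%VF) ->
  (forall y z, l (br y z) = (r z \o l y)%VF - (l y \o r z)%VF) ->
  (forall y z, l (br y z) = (r z \o l y)%VF + (l y \o l z)%VF) ->
  in_normalizer br A x ->
  forall (k : nat) (a : L), a \in A ->
    in_rA_pow r A k.+1 ((lpow (r a) k.+1 \o r x)%VF - (r x \o lpow (r a) k.+1)%VF) /\
    in_rA_sum_rx r A x k ((lpow (r x) k.+1 \o r a)%VF - (r a \o lpow (r x) k.+1)%VF).
Proof.
move=> _ _ _ _ rlin _ rbr _ _ nx k a aA.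
have lpS (f : 'End(V)) n : lpow f n.+1 = (f \o lpow f n)%VF by [].
split.
  elim: k => [|k IH].
    have -> : ((lpow (r a) 1 \o r x) - (r x \o lpow (r a) 1))%VF
      = (r (br x a) \o lpow (r a) 0)%VF.
      by rewrite rbr /lpow /= !comp_lfun1r.
    by apply: pow_lmul => //; [case: (nx a aA) | apply: pow_lpow].
  have -> : ((lpow (r a) k.+2 \o r x) - (r x \o lpow (r a) k.+2))%VF =
    (r a \o ((lpow (r a) k.+1 \o r x) - (r x \o lpow (r a) k.+1)))%VF
    + (r (br x a) \o lpow (r a) k.+1)%VF.
    rewrite rbr comp_lfunDr comp_lfunNr comp_lfunDl comp_lfunNl.
    rewrite lpS -!comp_lfunA !comp_lfunA.
    by rewrite addrA subrK.
  apply: pow_add; first exact: pow_lmul.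
  by apply: pow_lmul; [case: (nx a aA) | apply: pow_lpow].
suff H : forall n b, b \in A -> @S _ _ _ r A x n
  ((lpow (r x) n \o r b)%VF - (r b \o lpow (r x) n)%VF).
  have [c [Hc E]] := H k.+1 a aA.
  exists (fun j : 'I_k.+1 => c j); split => //.
elim=> [|n IH] b bA.
  exists (fun _ => 0); split; first by move=> _; rewrite mem0v.
  by rewrite big_ord0 /lpow /= comp_lfun1l comp_lfun1r subrr.
have bxA : br b x \in A by case: (nx b bA).
have -> : ((lpow (r x) n.+1 \o r b) - (r b \o lpow (r x) n.+1))%VF =
  (((lpow (r x) n \o r b) - (r b \o lpow (r x) n)) \o r x)%VF +
  (((lpow (r x) n \o r (br b x)) - (r (br b x) \o lpow (r x) n))
   + (r (br b x) \o lpow (r x) n))%VF.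
  rewrite (subrK (r (br b x) \o lpow (r x) n)%VF).
  rewrite rbr comp_lfunDr comp_lfunNr comp_lfunDl comp_lfunNl.
  rewrite -!lpowSr !comp_lfunA.
  exact: zid.
apply: (S_add rlin); first exact: (S_rx rlin (IH b bA)).
apply: (S_add rlin); first exact: (S_mono rlin (IH _ bxA)).
exact: (S_single rlin).
Qed.
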